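(* Let $i,j,\ell$ be integers with $1\le i\le j\le\ell$. Suppose $\mathcal F\subset\binom{[n]}{\ell}$ is intersecting and $\tau(\mathcal F)\geq j$. Then $\Delta_i(\mathcal F)\leq \ell^{j-i}\Delta_j(\mathcal F)$.
   Context: A family is intersecting if any two members intersect. $\tau(\mathcal F)$ is the minimum size of a set meeting all members of $\mathcal F$. For $S\subset[n]$, $\mathcal F(S)=\{F\setminus S: S\subset F\in\mathcal F\}$, and $\Delta_i(\mathcal F)=\max_{S\in\binom{[n]}{i}}|\mathcal F(S)|$. *)

(* Defs.v *)
From mathcomp Require Import all_boot all_order.
Set Implicit Arguments. Unset Strict Implicit. Unset Printing Implicit Defensive.

Definition intersecting n (F : {set {set 'I_n}}) : Prop :=
  forall A B, A \in F -> B \in F -> A :&: B != set0.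

Definition uniform n (F : {set {set 'I_n}}) (l : nat) : Prop :=
  forall A, A \in F -> #|A| = l.

Definition transversal n (F : {set {set 'I_n}}) (T : {set 'I_n}) : bool :=
  [forall A in F, A :&: T != set0].

Definition tau n (F : {set {set 'I_n}}) : nat :=
  \big[minn/n]_(T : {set 'I_n} | transversal F T) #|T|.

Definition link n (F : {set {set 'I_n}}) (S : {set 'I_n}) : {set {set 'I_n}} :=
  [set A :\: S | A in [set A in F | S \subset A]].

Definition Delta n (i : nat) (F : {set {set 'I_n}}) : nat :=
  \max_(S : {set 'I_n} | #|S| == i) #|link F S|.

(* Main.v *)
Require Import Defs.
From mathcomp Require Import all_boot all_order.

Lemma card_bigcup_le (T I : finType) (P : pred I) (G : I -> {set T}) :
  #|\bigcup_(x | P x) G x| <= \sum_(x | P x) #|G x|.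
Proof.
elim/big_rec2: _ => [|x U s _ IH]; first by rewrite cards0.
apply: leq_trans (leq_add (leqnn _) IH).
by rewrite cardsU leq_subr.
Qed.

Lemma link_card n (F : {set {set 'I_n}}) S :
  #|link F S| = #|[set B in F | S \subset B]|.
Proof.
rewrite /link card_in_imset // => B B'; rewrite !inE => /andP[_ hB] /andP[_ hB'] e.
by rewrite -(setID B S) -(setID B' S) e (setIidPr hB) (setIidPr hB').
Qed.

Lemma tau_le n (F : {set {set 'I_n}}) S : Defs.transversal F S -> tau F <= #|S|.
Proof.
move=> hS; rewrite /tau unlock /reducebig.
have : S \in index_enum {set 'I_n} by rewrite mem_index_enum.
elim: (index_enum _) => //= a r IH; rewrite inE => /orP[/eqP<-|hr].
  by rewrite hS geq_minl.
by case: ifP => _; [apply: leq_trans (geq_minr _ _) (IH hr)|exact: IH].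
Qed.

Lemma step n (F : {set {set 'I_n}}) l k :
  uniform F l -> intersecting F -> k < tau F -> Delta k F <= l * Delta k.+1 F.
Proof.
move=> hu hi hk; apply/bigmax_leqP => S /eqP hS.
have : ~~ Defs.transversal F S.
  by apply: contraTN hk => /tau_le; rewrite -leqNgt hS.
case/forallPn => A; rewrite negb_imply negbK => /andP[hA /eqP hAS].
rewrite link_card.
have sub : [set B in F | S \subset B] \subset
     \bigcup_(x in A) [set B in F | x |: S \subset B].
  apply/subsetP => B; rewrite inE => /andP[hB hSB].
  have /set0Pn[x] := hi _ _ hB hA; rewrite inE => /andP[xB xA].
  apply/bigcupP; exists x => //; rewrite inE hB /= subUset sub1set xB hSB.
  by [].
apply: leq_trans (subset_leq_card sub) _.
have hb := @card_bigcup_le _ _ (fun x => x \in A) (fun x => [set B in F | x |: S \subset B]).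
idtac. apply: leq_trans hb _.
rewrite -(hu _ hA) -sum1_card big_distrl /= leq_sum // => x xA.
rewrite mul1n -link_card.
apply: (leq_bigmax_cond (F := fun T => #|link F T|)).
rewrite cardsU1 hS.
have -> : x \notin S.
  apply/negP => xS; move/eqP: hAS; apply/negP; apply/set0Pn; exists x.
  by rewrite inE xA.
by [].
Qed.

Theorem proposition5p2 (n i j l : nat) (F : {set {set 'I_n}}) :
  1 <= i -> i <= j -> j <= l ->
  uniform F l -> intersecting F -> j <= tau F ->
  Delta i F <= l ^ (j - i) * Delta j F.
Proof.
move=> _ hij _ hu hin.
have [d ->] : exists d, j = d + i by exists (j - i); rewrite subnK.
rewrite addnK.
elim: d => [|d IH] hd; first by rewrite expn0 mul1n add0n.
have h : d + i < tau F by rewrite -addSn.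
apply: leq_trans (IH (ltnW h)) _.
rewrite expnSr -mulnA leq_mul2l; apply/orP; right.
by rewrite addSn (@step _ _ _ _ hu hin h).
Qed.
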